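(* Let $n\ge 1$ and $Dic_{4n}=\langle a,x\mid a^{2n}=1,\ x^2=a^n,\ x^{-1}ax=a^{-1}\rangle$ be the dicyclic group of order $4n$. Then: \begin{enumerate} \item If $n\neq 2$, then $\mathcal{CD}(Dic_{4n})$ is a chain of length $0$; namely $\mathcal{CD}(Dic_{4n})=\{Dic_{4n}\}$ for $n=1$, and $\mathcal{CD}(Dic_{4n})=\{\langle a\rangle\}$ for $n\ge 3$. \item If $n=2$, then $\mathcal{CD}(Dic_{4n})$ is a quasi-antichain of width $3$, namely the set of all subgroups $H$ with $Z(Dic_{4n})\le H\le Dic_{4n}$. \end{enumerate}
   Context: For a finite group $G$ and $H\le G$, $m_G(H)=|H|\,|C_G(H)|$, $m^*(G)=\max\{m_G(H)\mid H\le G\}$, and the Chermak-Delgado lattice is $\mathcal{CD}(G)=\{H\le G\mid m_G(H)=m^*(G)\}$. A chain of length $0$ is a one-element lattice. A lattice is a quasi-antichain of width $w$ if it consists of a least element, a greatest element, and $w$ further pairwise incomparable elements. *)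

(* Defs.v *)
From mathcomp Require Import all_boot all_order all_fingroup all_solvable.
Set Implicit Arguments. Unset Strict Implicit. Unset Printing Implicit Defensive.
Local Open Scope group_scope.

Section CD.
Variable gT : finGroupType.

Definition mCD (G H : {group gT}) : nat := #|H| * #|'C_G(H)|.

Definition mstar (G : {group gT}) : nat :=
  \max_(H : {group gT} | H \subset G) mCD G H.

Definition CDlattice (G : {group gT}) : {set {group gT}} :=
  [set H : {group gT} | (H \subset G) && (mCD G H == mstar G)].

Definition chain0 (L : {set {group gT}}) : Prop := #|L| = 1%N.

Definition quasi_antichain (L : {set {group gT}}) (w : nat) : Prop :=
  exists bot top : {group gT},
    [/\ bot \in L, top \in L & bot != top] /\
    [/\
        {in L, forall H : {group gT}, bot \subset H /\ H \subset top},
        #|L :\: [set bot; top]| = w &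
        {in L :\: [set bot; top] &, forall H K : {group gT}, H \subset K -> H = K}].
End CD.

(* Main.v *)
Require Import Defs.
From mathcomp Require Import all_boot all_order all_fingroup all_solvable.
From mathcomp Require Import zify.
Set Implicit Arguments. Unset Strict Implicit. Unset Printing Implicit Defensive.
Local Open Scope group_scope.

Lemma conj_comm (gT : finGroupType) (u v : gT) : commute u v -> u ^ v = u.
Proof. by move=> H; rewrite conjgE ?mulgA -?mulgA H mulKg. Qed.

Section Dic.
Variables (gT : finGroupType) (G : {group gT}) (a x : gT) (n : nat).
Hypotheses (n1 : (1 <= n)%N) (defG : G :=: <<[set a; x]>>)
  (a2n : a ^+ (2 * n)%N = 1) (x2 : x ^+ 2 = a ^+ n) (ax : a ^ x = a^-1)
  (cardG : #|G| = (4 * n)%N).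

Local Notation A := <[a]>%G.

Lemma aG : a \in G.
Proof. by rewrite defG mem_gen // !inE eqxx. Qed.
Lemma xG : x \in G.
Proof. by rewrite defG mem_gen // !inE eqxx orbT. Qed.
Lemma AG : A \subset G.
Proof. by rewrite cycle_subG aG. Qed.

Lemma conjAx z : z \in A -> z ^ x = z^-1.
Proof. by case/cycleP=> i ->; rewrite conjXg ax expgVn. Qed.

Lemma xN : x \in 'N(A).
Proof. by rewrite inE -cycleJ ax cycleV. Qed.

Lemma Gsub : G \subset A :|: A :* x.
Proof.
have sG: G \subset A <*> <[x]>.
  by rewrite defG gen_subG subUset !sub1set (subsetP (joing_subl _ _)) ?cycle_id
     // (subsetP (joing_subr _ _)) ?cycle_id.
apply/subsetP=> y /(subsetP sG); rewrite norm_joinEr ?cycle_subG ?xN //.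
case/mulsgP=> u v uA /cycleP[k ->] ->.
rewrite (divn_eq k 2) expgD mulnC expgM x2 -expgM mulgA.
have uA' : u * a ^+ (n * (k %/ 2)) \in A by rewrite groupM ?mem_cycle.
have : (k %% 2 < 2)%N by rewrite ltn_mod.
case: (k %% 2) => [|[|//]] _; rewrite inE.
  by rewrite mulg1 uA'.
by rewrite expg1 mem_rcoset mulgK uA' orbT.
Qed.

Lemma ordera : #[a] = (2 * n)%N.
Proof.
have h1 : (4 * n <= 2 * #[a])%N.
  rewrite -cardG; apply: leq_trans (subset_leq_card Gsub) _.
  by rewrite cardsU card_rcoset -orderE; lia.
have h2 : (#[a] %| 2 * n)%N by rewrite order_dvdn a2n.
have := dvdn_leq _ h2; move: h2 => /dvdnP[k hk]; lia.
Qed.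

Lemma cardA : #|A| = (2 * n)%N.
Proof. by rewrite -orderE ordera. Qed.

Lemma xnA : x \notin A.
Proof.
apply/negP=> xA; have := subset_leq_card Gsub.
by rewrite rcoset_id // setUid cardG cardA; lia.
Qed.

Lemma notA_dec y : y \in G -> y \notin A -> y * x^-1 \in A.
Proof.
by move=> /(subsetP Gsub); rewrite inE mem_rcoset => /orP[->|].
Qed.

Lemma conj_notA z y : z \in A -> y \in G -> y \notin A -> z ^ y = z^-1.
Proof.
move=> zA yG ynA; have uA := notA_dec yG ynA.
have c : commute z (y * x^-1).
  by move: zA uA => /cycleP[i ->] /cycleP[j ->]; apply: commuteX2.
by rewrite -(mulgKV x y) conjgM (conj_comm c) conjAx.
Qed.

Lemma sq_notA y : y \in G -> y \notin A -> y ^+ 2 = a ^+ n.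
Proof.
move=> yG ynA; have uA := notA_dec yG ynA.
set u := y * x^-1 in uA.
have -> : y = u * x by rewrite /u mulgKV.
have hx : x * u = u^-1 * x.
  have e : (u^-1) ^ x = u by rewrite conjAx ?groupV // invgK.
  by rewrite -{1}e conjgE mulVKg.
by rewrite expgS expg1 -mulgA (mulgA x) hx !mulgA mulgV mul1g -x2 expgS expg1.
Qed.

Lemma L2 (K : {group gT}) : K \subset A -> {in K, forall z, z ^+ 2 = 1} -> (#|K| <= 2)%N.
Proof.
move=> sKA h; have /cyclicP[g defK] := cyclicS sKA (cycle_cyclic a).
have gK : g \in K by rewrite defK cycle_id.
rewrite defK -orderE; apply: dvdn_leq => //.
by rewrite order_dvdn h.
Qed.

Lemma L1 (K : {group gT}) : K \subset G -> (#|K| <= 2 * #|K :&: A|)%N.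
Proof.
move=> sKG; have h := mul_cardG K A.
have h2 : (#|(K * A)%g| <= 4 * n)%N by rewrite -cardG subset_leq_card // mul_subG // AG.
rewrite cardA in h.
have : (#|K| * (2 * n) <= 2 * #|K :&: A| * (2 * n))%N by nia.
by rewrite leq_pmul2r //; lia.
Qed.

Lemma a2 : (2 <= n)%N -> a ^+ 2 != 1.
Proof.
move=> n2; apply/negP=> /eqP h.
have : (#[a] %| 2)%N by rewrite order_dvdn h.
by rewrite ordera => /dvdn_leq; lia.
Qed.

Lemma sq1 (z : gT) : z ^-1 = z -> z ^+ 2 = 1.
Proof. by move=> h; rewrite expgS expg1 -{1}h mulVg. Qed.

Lemma CA : (2 <= n)%N -> 'C_G(A) \subset A.
Proof.
move=> n2; apply/subsetP=> y; rewrite inE => /andP[yG /centP yC].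
apply/negPn/negP=> ynA.
have h1 := conj_notA (cycle_id a) yG ynA.
have h2 : a ^ y = a by apply: conj_comm; apply/commute_sym/yC/cycle_id.
by move/negP: (a2 n2); apply; apply/eqP/sq1; rewrite -h1 h2.
Qed.

Lemma CAeq : (2 <= n)%N -> 'C_G(A) = A.
Proof.
move=> n2; apply/eqP; rewrite eqEsubset CA // subsetI AG.
by rewrite -abelianE cycle_abelian.
Qed.

Lemma mA : (2 <= n)%N -> mCD G A = (2 * n * (2 * n))%N.
Proof. by move=> n2; rewrite /mCD CAeq // cardA. Qed.

Lemma M (H : {group gT}) : (2 <= n)%N -> H \subset G ->
  (mCD G H <= 8 * n)%N \/ (H \subset A /\ (mCD G H <= #|H| * (2 * n))%N).
Proof.
move=> n2 sHG; rewrite /mCD.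
have cCG : (#|'C_G(H)| <= 4 * n)%N by rewrite -cardG subset_leq_card // subsetIl.
case sHA: (H \subset A).
  case sCA: ('C_G(H) \subset A).
    by right; split=> //; rewrite leq_mul2l -cardA subset_leq_card ?orbT.
  left; case/subsetPn: (negbT sCA) => w; rewrite inE => /andP[wG /centP wC] wnA.
  have : (#|H| <= 2)%N.
    apply: L2 => // h hH.
    apply: sq1; rewrite -(conj_notA (subsetP sHA h hH) wG wnA).
    by apply: conj_comm; apply/commute_sym/wC.
  nia.
left; case/subsetPn: (negbT sHA) => w wH wnA.
have wG := subsetP sHG w wH.
have cI : (#|'C_G(H) :&: A| <= 2)%N.
  apply: L2; first exact: subsetIr.
  move=> z; rewrite !inE => /andP[/andP[zG /centP zC] zA].
  apply: sq1; rewrite -(conj_notA zA wG wnA).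
  by apply: conj_comm; apply: zC.
have cC : (#|'C_G(H)| <= 4)%N.
  by apply: leq_trans (L1 (subsetIl _ _)) _; rewrite -[4%N]/(2*2)%N leq_pmul2l.
case eHG: (H :==: G).
  move/eqP: eHG => eHG.
  have sCA : 'C_G(H) \subset A.
    by apply: subset_trans (CA n2); rewrite eHG setIS // centS // AG.
  have : (#|'C_G(H)| <= 2)%N by rewrite -(setIidPl sCA).
  have hH : #|H| = (4 * n)%N by rewrite eHG cardG.
  by rewrite hH => c2; apply: leq_trans (leq_mul (leqnn _) c2) _; lia.
have dH := cardSg sHG; rewrite cardG in dH.
have nH : #|H| != (4 * n)%N.
  apply/negP=> /eqP hc; move/negP: (negbT eHG); apply.
  by rewrite eqEcard sHG cardG /=; apply: eq_leq (esym hc).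
case/dvdnP: dH => k hk.
have k2 : (2 <= k)%N.
  case: k hk => [|[|k]] hk //; first lia.
  by move: nH; rewrite hk mul1n eqxx.
nia.
Qed.

Lemma mstar_ub : (2 <= n)%N -> forall H : {group gT}, H \subset G ->
  (mCD G H <= maxn (8 * n) (2 * n * (2 * n)))%N.
Proof.
move=> n2 H sHG; case: (M n2 sHG) => [h|[sHA h]].
  by apply: leq_trans h _; rewrite leq_maxl.
apply: leq_trans h _; apply: leq_trans (leq_maxr _ _).
by rewrite leq_mul2r -cardA subset_leq_card ?orbT.
Qed.

Lemma mstar_eq : (2 <= n)%N -> mstar G = (2 * n * (2 * n))%N.
Proof.
move=> n2; have e : maxn (8 * n) (2 * n * (2 * n)) = (2 * n * (2 * n))%N.
  by apply/maxn_idPr; nia.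
apply/eqP; rewrite eqn_leq; apply/andP; split.
  by apply/bigmax_leqP => H sHG; rewrite -e mstar_ub.
by rewrite -(mA n2); apply: (leq_bigmax_cond A AG).
Qed.

Lemma CD3 : (3 <= n)%N -> CDlattice G = [set A].
Proof.
move=> n3; have n2 : (2 <= n)%N by lia.
apply/setP => H; rewrite !inE mstar_eq //.
case sHG: (H \subset G) => /=; last first.
  apply/esym/negbTE; apply/negP => /eqP eHA; by rewrite eHA AG in sHG.
apply/eqP/eqP => [hm|->]; last exact: mA.
case: (M n2 sHG) => [h|[sHA h]]; first by rewrite hm in h; nia.
apply: val_inj => /=; apply/eqP; rewrite eqEcard sHA cardA /=.
rewrite hm in h; move: h; rewrite leq_mul2r => /orP[/eqP h0|h1]; [lia | exact: h1].
Qed.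

Lemma CD1 : n = 1%N -> CDlattice G = [set G].
Proof.
move=> e1.
have abG : abelian G.
  apply: abelianS (cycle_abelian x).
  rewrite defG gen_subG subUset !sub1set cycle_id andbT.
  by rewrite -(expg1 a) -e1 -x2 mem_cycle.
have mH : forall H : {group gT}, H \subset G -> mCD G H = (#|H| * (4 * n))%N.
  move=> H sHG; rewrite /mCD (setIidPl _) ?cardG //.
  by rewrite centsC (subset_trans sHG abG).
have ms : mstar G = (4 * n * (4 * n))%N.
  apply/eqP; rewrite eqn_leq; apply/andP; split.
    apply/bigmax_leqP => H sHG; rewrite mH // leq_mul2r -cardG.
    by rewrite subset_leq_card ?orbT.
  by rewrite -{1}cardG -mH //; apply: (leq_bigmax_cond G (subxx _)).
apply/setP => H; rewrite !inE ms.
case sHG: (H \subset G) => /=; last first.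
  by apply/esym/negbTE; apply/negP => /eqP eHA; rewrite eHA subxx in sHG.
rewrite mH // eqn_mul2r; case: eqP => [|_] /=; first lia.
apply/eqP/eqP => [hc|->]; last by [].
apply: val_inj => /=; apply/eqP; rewrite eqEcard sHG cardG /=.
exact: eq_leq (esym hc).
Qed.

Lemma an1 : a ^+ n != 1.
Proof.
apply/negP => /eqP h; have : (#[a] %| n)%N by rewrite order_dvdn h.
by rewrite ordera => /dvdn_leq; lia.
Qed.

Lemma anZ : a ^+ n \in 'Z(G).
Proof.
rewrite /center inE groupX ?aG //= -sub_cent1 defG gen_subG subUset !sub1set.
apply/andP; split; apply/cent1P.
  by apply: commuteX; apply: commute_refl.
by rewrite -x2; apply: commuteX; apply: commute_refl.
Qed.

Lemma two_le (K : {group gT}) : a ^+ n \in K -> (2 <= #|K|)%N.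
Proof.
move=> aK; have : [set 1; a ^+ n] \subset K by rewrite subUset !sub1set aK group1.
by move/subset_leq_card; rewrite cards2 eq_sym an1.
Qed.

Lemma ZA : (2 <= n)%N -> 'Z(G) \subset A.
Proof.
by move=> n2; apply: subset_trans (CA n2); rewrite /center setIS // centS // AG.
Qed.

Lemma Zcent : G \subset 'C('Z(G)).
Proof. by rewrite centsC /center subsetIr. Qed.

Lemma cardZ : (2 <= n)%N -> #|'Z(G)| = 2%N.
Proof.
move=> n2; apply/eqP; rewrite eqn_leq two_le ?anZ // andbT.
apply: (L2 (K := 'Z(G)%G)) (ZA n2) _ => z zZ.
apply: sq1; rewrite -(conjAx (subsetP (ZA n2) z zZ)).
by apply: conj_comm; apply: commute_sym; exact: (centerC xG zZ).
Qed.

Lemma Zeq : (2 <= n)%N -> 'Z(G) = <[a ^+ n]>.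
Proof.
move=> n2; apply/eqP; rewrite eq_sym eqEcard cycle_subG anZ cardZ //=.
by apply: (two_le (K := <[a ^+ n]>%G)); apply: cycle_id.
Qed.

Lemma ub2 : n = 2%N -> forall H : {group gT}, H \subset G -> (mCD G H <= 16)%N.
Proof. by move=> e2 H sHG; have := mstar_ub (eq_leq (esym e2)) sHG; rewrite e2. Qed.

Lemma cardsH (H : {group gT}) : n = 2%N -> 'Z(G) \subset H -> H \subset G ->
  [\/ #|H| = 2%N, #|H| = 4%N | #|H| = 8%N].
Proof.
move=> e2 sZH sHG.
have := cardSg sHG; have := cardSg (H := 'Z(G)%G) sZH.
rewrite cardG cardZ e2 //=; move: #|H| => d.
do 9?[case: d => [|d]]; rewrite //=;
  try (by move=> *; constructor 1); try (by move=> *; constructor 2);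
  try (by move=> *; constructor 3).
Qed.

Lemma HZ16 (H : {group gT}) : n = 2%N -> 'Z(G) \subset H -> H \subset G ->
  mCD G H = 16%N.
Proof.
move=> e2 sZH sHG; have n2 : (2 <= n)%N by rewrite e2.
case: (cardsH e2 sZH sHG) => hH.
- have eHZ : (H : {set gT}) = 'Z(G).
    by apply/eqP; rewrite eq_sym eqEcard sZH cardZ // hH.
  by rewrite /mCD eHZ (setIidPl Zcent) cardZ // cardG e2.
- have abH : abelian H by apply: (card_p2group_abelian (p := 2)) => //; rewrite hH.
  have sHC : H \subset 'C_G(H) by rewrite subsetI sHG.
  have nC : #|'C_G(H)| != 8%N.
    apply/negP => /eqP hC.
    have eC : 'C_G(H) = G.
      by apply/eqP; rewrite eqEcard subsetIl cardG e2 hC.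
    have sHZ : H \subset 'Z(G).
      by rewrite /center subsetI sHG centsC -eC subsetIr.
    by have := subset_leq_card sHZ; rewrite cardZ // hH.
  have d1 := cardSg (subsetIl G 'C(H)); have d2 := subset_leq_card sHC.
  rewrite /mCD hH; move: nC d1 d2; rewrite cardG e2 hH /=.
  move: #|'C_G(H)| => d.
  by do 9?[case: d => [|d]]; rewrite //=; move=> _ /dvdn_leq; lia.
- have eHG : (H : {set gT}) = G.
    by apply/eqP; rewrite eqEcard sHG cardG e2 hH.
  rewrite /mCD eHG cardG e2.
  by have := cardZ n2; rewrite /center => ->.
Qed.

Lemma ZinCD (H : {group gT}) : n = 2%N -> H \subset G -> mCD G H = 16%N ->
  'Z(G) \subset H.
Proof.
move=> e2 sHG hm; apply/negPn/negP => nZH.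
pose K := (H <*> 'Z(G))%G.
have sKG : K \subset G by rewrite join_subG sHG center_sub.
have pHK : H \proper K.
  rewrite properEneq joing_subl andbT; apply/eqP => eHK.
  by move/negP: nZH; apply; rewrite eHK joing_subr.
have sC : 'C_G(H) \subset 'C_G(K).
  rewrite /= centY; apply/subsetP => y; rewrite !inE => /andP[yG yC].
  by rewrite yG yC /= (subsetP Zcent y yG).
have c0 : (0 < #|'C_G(H)|)%N by apply/card_gt0P; exists 1; rewrite group1.
have := ub2 e2 sKG; move: hm; rewrite /mCD => hm.
have l1 : (#|H| * #|'C_G(H)| < #|K| * #|'C_G(H)|)%N.
  by rewrite ltn_pmul2r // proper_card.
have l2 : (#|K| * #|'C_G(H)| <= #|K| * #|'C_G(K)|)%N.
  by rewrite leq_mul2l subset_leq_card ?orbT.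
lia.
Qed.

Lemma CD2 : n = 2%N -> CDlattice G = [set H : {group gT} | ('Z(G) \subset H) && (H \subset G)].
Proof.
move=> e2; have n2 : (2 <= n)%N by rewrite e2.
apply/setP => H; rewrite !inE mstar_eq // e2.
apply/andP/andP => [[sHG /eqP hm]|[sZH sHG]]; split => //.
  exact: ZinCD.
by apply/eqP; apply: HZ16.
Qed.

Lemma ord4 w : n = 2%N -> w \in G -> w \notin A -> #[w] = 4%N.
Proof.
move=> e2 wG wnA; have n2 : (2 <= n)%N by rewrite e2.
have w2 := sq_notA wG wnA; rewrite e2 in w2.
have d4 : (#[w] %| 4)%N.
  by rewrite order_dvdn -[4%N]/(2 * 2)%N expgM w2 -expgM -[(2*2)%N]/(2 * 2)%N -{2}e2 a2n.
have nd2 : ~~ (#[w] %| 2)%N by rewrite order_dvdn w2 (a2 n2).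
move: d4 nd2; move: #[w] => d.
by do 6?[case: d => [|d]]; rewrite //=; move=> /dvdn_leq; lia.
Qed.

Lemma cyc_eq w v : n = 2%N -> w \in G -> w \notin A -> v \in G -> v \notin A ->
  w \in <[v]> -> <[w]> = <[v]>.
Proof.
move=> e2 wG wnA vG vnA wv; apply/eqP; rewrite eqEcard cycle_subG wv.
by rewrite -!orderE (ord4 e2 wG wnA) (ord4 e2 vG vnA).
Qed.

Lemma axG : a * x \in G.
Proof. by rewrite groupM ?aG ?xG. Qed.

Lemma axnA : a * x \notin A.
Proof.
apply/negP => h; move/negP: xnA; apply.
by rewrite -(mulKg a x) groupM ?groupV ?cycle_id.
Qed.

Lemma w_class w : n = 2%N -> w \in G -> w \notin A ->
  <[w]> = <[x]> \/ <[w]> = <[a * x]>.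
Proof.
move=> e2 wG wnA; have := notA_dec wG wnA => /cycleP[i hi].
have ew : w = a ^+ (i %% 4) * x.
  have o4 : #[a] = 4%N by rewrite ordera e2.
  by rewrite -o4 expg_mod_order -hi mulgKV.
have ax2 := sq_notA axG axnA; rewrite e2 in ax2.
have xx2 := x2; rewrite e2 in xx2.
have : (i %% 4 < 4)%N by rewrite ltn_mod.
move: ew; move: (i %% 4) => j.
case: j => [|[|[|[|//]]]] ew _.
- by left; rewrite ew mul1g.
- by right; rewrite ew expg1.
- left; apply: (cyc_eq e2 wG wnA xG xnA).
  by rewrite ew -xx2 groupM ?mem_cycle ?cycle_id.
- right; apply: (cyc_eq e2 wG wnA axG axnA).
  by rewrite ew -[3%N]/(2 + 1)%N expgD expg1 -mulgA -ax2 groupM ?mem_cycle ?cycle_id.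
Qed.

Lemma H4 (H : {group gT}) : n = 2%N -> H \subset G -> #|H| = 4%N ->
  (H :==: A) || (H :==: <[x]>) || (H :==: <[a * x]>).
Proof.
move=> e2 sHG hH.
case sHA: (H \subset A).
  by rewrite eqEcard sHA cardA e2 hH.
case/subsetPn: (negbT sHA) => w wH wnA.
have wG := subsetP sHG w wH.
have eH : (H : {set gT}) = <[w]>.
  apply/eqP; rewrite eq_sym eqEcard cycle_subG wH -orderE (ord4 e2 wG wnA).
  by rewrite hH.
by rewrite eH; case: (w_class e2 wG wnA) => ->; rewrite eqxx ?orbT.
Qed.

Lemma geq (H K : {group gT}) : (H == K) = (H :==: K).
Proof. by []. Qed.

Definition Lmid := CDlattice G :\: [set 'Z(G)%G; G].

Lemma inLmid (H : {group gT}) : n = 2%N ->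
  (H \in Lmid) = [&& (H :!=: 'Z(G)), (H :!=: G), 'Z(G) \subset H & H \subset G].
Proof.
move=> e2; rewrite /Lmid CD2 // !inE -!val_eqE /= negb_or.
by rewrite -!andbA.
Qed.

Lemma mid4 (H : {group gT}) : n = 2%N -> H \in Lmid -> #|H| = 4%N.
Proof.
move=> e2; have n2 : (2 <= n)%N by rewrite e2.
rewrite inLmid // => /and4P[nZ nG sZH sHG].
case: (cardsH e2 sZH sHG) => // hH.
  by case/negP: nZ; rewrite eq_sym eqEcard sZH cardZ // hH.
by case/negP: nG; rewrite eqEcard sHG cardG e2 hH.
Qed.

Lemma good (K : {group gT}) : n = 2%N -> 'Z(G) \subset K -> K \subset G ->
  #|K| = 4%N -> K \in Lmid.
Proof.
move=> e2 sZK sKG hK; have n2 : (2 <= n)%N by rewrite e2.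
rewrite inLmid // sZK sKG !andbT; apply/andP; split; apply/negP => /eqP e.
  by move: hK; rewrite e cardZ.
by move: hK; rewrite e cardG e2.
Qed.

Lemma good_w w : n = 2%N -> w \in G -> w \notin A -> <[w]>%G \in Lmid.
Proof.
move=> e2 wG wnA; have n2 : (2 <= n)%N by rewrite e2.
apply: good => //=.
- by rewrite Zeq // cycle_subG -(sq_notA wG wnA) mem_cycle.
- by rewrite cycle_subG.
- by rewrite -orderE (ord4 e2 wG wnA).
Qed.

Lemma Lmid_eq : n = 2%N -> Lmid = [set A; <[x]>%G; <[a * x]>%G].
Proof.
move=> e2; have n2 : (2 <= n)%N by rewrite e2.
apply/setP => H; apply/idP/idP.
  move=> hH; have h4 := mid4 e2 hH; rewrite !inE !geq.
  by move: hH; rewrite inLmid // => /and4P[_ _ _ sHG]; rewrite ?orbA; apply: H4.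
have gA : A \in Lmid by apply: good => //=; [exact: ZA | exact: AG | rewrite cardA e2].
case/setUP => [/setU1P[->|/set1P ->]|/set1P ->].
- exact: gA.
- exact: good_w e2 xG xnA.
- exact: good_w e2 axG axnA.
Qed.

Lemma card_Lmid : n = 2%N -> #|Lmid| = 3%N.
Proof.
move=> e2; rewrite Lmid_eq // -setUA cardsU1 cards2 !inE !geq.
have d1 : A != <[x]>%G :> {set gT}.
  by apply/eqP => e; move/negP: xnA; apply; rewrite e cycle_id.
have d2 : A != <[a * x]>%G :> {set gT}.
  by apply/eqP => e; move/negP: axnA; apply; rewrite e cycle_id.
have d3 : <[x]>%G != <[a * x]>%G :> {set gT}.
  apply/eqP => e; move/eqP: d1; apply.
  have aX : a \in <[x]>.
    rewrite -(mulgK x a) groupM ?groupV ?cycle_id //.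
    by have := cycle_id (a * x); rewrite -e => h; exact: h.
  apply/eqP; rewrite eqEcard cycle_subG aX -!orderE (ord4 e2 xG xnA) ordera e2.
  by [].
by rewrite (negbTE d1) (negbTE d2) d3.
Qed.

Lemma main_sec :
  (n != 2%N ->
     chain0 (CDlattice G) /\
     (n = 1%N -> CDlattice G = [set G]) /\
     ((3 <= n)%N -> CDlattice G = [set <[a]>%G]))
  /\
  (n = 2%N ->
     quasi_antichain (CDlattice G) 3 /\
     CDlattice G = [set H : {group gT} | ('Z(G) \subset H) && (H \subset G)]).
Proof.
split.
  move=> n2; have h : n = 1%N \/ (3 <= n)%N by lia.
  split; last by split; [exact: CD1 | exact: CD3].
  by rewrite /chain0; case: h => [e|e]; [rewrite CD1 // cards1 | rewrite CD3 // cards1].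
move=> e2; have n2 : (2 <= n)%N by rewrite e2.
split; last exact: CD2.
exists 'Z(G)%G, G; split; split.
- by rewrite CD2 // inE subxx center_sub.
- by rewrite CD2 // inE center_sub subxx.
- rewrite geq; apply/eqP => e; have := cardZ n2; rewrite e cardG e2 //.
- by move=> H; rewrite CD2 // inE => /andP[].
- exact: card_Lmid.
- move=> H K hH hK sHK; apply: val_inj; apply/eqP.
  by rewrite eqEcard sHK (mid4 e2 hK) (mid4 e2 hH).
Qed.

End Dic.

Theorem corollary3p2 (gT : finGroupType) (G : {group gT}) (a x : gT) (n : nat) :
  (1 <= n)%N ->
  G :=: <<[set a; x]>> ->
  a ^+ (2 * n)%N = 1 -> x ^+ 2 = a ^+ n -> a ^ x = a^-1 ->
  #|G| = (4 * n)%N ->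
  (n != 2%N ->
     chain0 (CDlattice G) /\
     (n = 1%N -> CDlattice G = [set G]) /\
     ((3 <= n)%N -> CDlattice G = [set <[a]>%G]))
  /\
  (n = 2%N ->
     quasi_antichain (CDlattice G) 3 /\
     CDlattice G = [set H : {group gT} | ('Z(G) \subset H) && (H \subset G)]).
Proof.
move=> n1 defG a2n x2 ax cardG.
by apply: (main_sec (x := x)).
Qed.
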